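(* Let $\alpha>0$ and $M>1$ be real numbers, and let $x\in[0,M]$. For $n\in\mathbb N$ define $$C_{\alpha,n}(M;x)=\sum_{k=0}^{\lfloor M\rfloor}f_n(k),\qquad f_n(t)=\begin{cases}0 & \text{if } t=0 \text{ or } x=0,\\ t^\alpha\cos^{2n}(\pi x/t) & \text{otherwise}.\end{cases}$$ Then the sequence $n\mapsto C_{\alpha,n}(M;x)$ is non-increasing and $\lim_{n\to\infty}C_{\alpha,n}(M;x)=\sigma_\alpha(x)$.
   Context: For $m\in\mathbb N$, $\sigma_\alpha(m)=\sum_{k\mid m}k^\alpha$ (sum over positive divisors $k$ of $m$), and $\sigma_\alpha$ is extended to $[0,\infty)$ by setting $\sigma_\alpha(x)=0$ for $x\in[0,\infty)\setminus\mathbb N$. The sum over $k$ runs over integers $0\le k\le\lfloor M\rfloor$. *)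

(* Defs.v *)
From Stdlib Require Import Reals Lra Lia List.
Open Scope R_scope.

Definition sigma_nat (alpha : R) (m : nat) : R :=
  fold_right Rplus 0
    (map (fun k => Rpower (INR k) alpha)
         (filter (fun k => Nat.eqb (Nat.modulo m k) 0) (seq 1 m))).

(* Extension to [0, oo): sigma_alpha(x) = sigma_nat alpha m if x = m is a
   positive integer, and 0 otherwise (in particular sigma_alpha(0) = 0). *)
Definition sigma_real (alpha x : R) : R :=
  let m := Z.to_nat (Int_part x) in
  if Req_EM_T x (INR m) then
    (if Nat.ltb 0 m then sigma_nat alpha m else 0)
  else 0.

Definition f_term (alpha x : R) (n k : nat) : R :=
  if Nat.eqb k 0 then 0
  else if Req_EM_T x 0 then 0
  else Rpower (INR k) alpha * (cos (PI * x / INR k)) ^ (2 * n).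

Definition C_seq (alpha M x : R) (n : nat) : R :=
  sum_f_R0 (fun k => f_term alpha x n k) (Z.to_nat (Int_part M)).

(* Main.v *)
Require Import Defs.
From Stdlib Require Import Reals.
From Stdlib Require Import Lra Lia List Arith ZArith.
Open Scope R_scope.

Lemma cv_finsum (g : nat -> nat -> R) (L : nat -> R) (N : nat) :
  (forall k, Un_cv (fun n => g n k) (L k)) ->
  Un_cv (fun n => sum_f_R0 (fun k => g n k) N) (sum_f_R0 L N).
Proof.
  intros H. induction N as [|N IH]; simpl.
  - apply H.
  - apply CV_plus; auto.
Qed.

Lemma cv_const (a : R) : Un_cv (fun _ => a) a.
Proof. intros e He. exists 0%nat. intros. unfold Rdist. rewrite Rminus_diag, Rabs_R0. lra. Qed.

Lemma cv_geom0 (c : R) : 0 <= c < 1 -> Un_cv (fun n => c ^ n) 0.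
Proof.
  intros Hc e He. destruct (pow_lt_1_zero c) with (y := e) as [N HN].
  - rewrite Rabs_right; lra.
  - exact He.
  - exists N. intros n Hn. unfold Rdist. rewrite Rminus_0_r. auto.
Qed.

Definition cs (x : R) (k : nat) : R := (cos (PI * x / INR k)) ^ 2.

Definition Lterm (alpha x : R) (k : nat) : R :=
  if Nat.eqb k 0 then 0
  else if Req_EM_T x 0 then 0
  else if Req_EM_T (cs x k) 1 then Rpower (INR k) alpha else 0.

Lemma cs_bounds x k : 0 <= cs x k <= 1.
Proof.
  unfold cs. pose proof (sin2_cos2 (PI * x / INR k)). unfold Rsqr in H.
  simpl. split; nra.
Qed.

Lemma f_term_eq alpha x n k : f_term alpha x n k =
  if Nat.eqb k 0 then 0 else if Req_EM_T x 0 then 0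
  else Rpower (INR k) alpha * (cs x k) ^ n.
Proof. unfold f_term, cs. rewrite pow_mult. reflexivity. Qed.

Lemma term_cv alpha x k : Un_cv (fun n => f_term alpha x n k) (Lterm alpha x k).
Proof.
  eapply Un_cv_ext. { intro n. symmetry. apply f_term_eq. }
  unfold Lterm.
  destruct (Nat.eqb k 0); [apply cv_const|].
  destruct (Req_EM_T x 0); [apply cv_const|].
  destruct (Req_EM_T (cs x k) 1) as [E|E].
  - rewrite E. eapply Un_cv_ext; [|apply cv_const]. intro m. simpl. rewrite pow1; ring.
  - replace 0 with (Rpower (INR k) alpha * 0) by ring.
    apply CV_mult; [apply cv_const|]. apply cv_geom0.
    pose proof (cs_bounds x k). lra.
Qed.

Lemma cs_one_iff x k : (0 < k)%nat ->
  (cs x k = 1 <-> exists j : Z, x = IZR j * INR k).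
Proof.
  intros Hk. assert (Hk' : 0 < INR k) by (apply lt_0_INR; lia).
  pose proof (sin2_cos2 (PI * x / INR k)) as S. unfold Rsqr in S.
  unfold cs; simpl. rewrite Rmult_1_r. split.
  - intros H. assert (sin (PI * x / INR k) * sin (PI * x / INR k) = 0) by lra.
    assert (sin (PI * x / INR k) = 0) by nra.
    destruct (sin_eq_0_0 _ H1) as [j Hj]. exists j.
    pose proof PI_RGT_0.
    apply (Rmult_eq_reg_l PI); [|lra].
    apply (Rmult_eq_reg_r (/ INR k)); [|apply Rinv_neq_0_compat; lra].
    unfold Rdiv in Hj. rewrite Hj. field. lra.
  - intros [j Hj]. assert (sin (PI * x / INR k) = 0).
    { apply sin_eq_0_1. exists j. rewrite Hj. field. lra. }
    rewrite H in S. lra.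
Qed.

Lemma fold_plus a l : fold_right Rplus a l = fold_right Rplus 0 l + a.
Proof. induction l as [|b l IH]; simpl; [ring|rewrite IH; ring]. Qed.

Definition Dterm (alpha : R) (m k : nat) : R :=
  if Nat.eqb k 0 then 0 else if Nat.eqb (Nat.modulo m k) 0 then Rpower (INR k) alpha else 0.

Lemma sum_filter alpha m N :
  sum_f_R0 (Dterm alpha m) N =
  fold_right Rplus 0 (map (fun k => Rpower (INR k) alpha)
    (filter (fun k => Nat.eqb (Nat.modulo m k) 0) (seq 1 N))).
Proof.
  induction N as [|N IH].
  - simpl. reflexivity.
  - rewrite seq_S, filter_app, map_app, fold_right_app, fold_plus.
    change (sum_f_R0 (Dterm alpha m) (S N)) with (sum_f_R0 (Dterm alpha m) N + Dterm alpha m (S N)).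
    rewrite IH. unfold Dterm. change (1 + N)%nat with (S N). change (Nat.eqb (S N) 0) with false.
    cbn iota. cbn [filter].
    destruct (Nat.eqb (m mod S N) 0); cbn [map fold_right]; ring.
Qed.

Lemma sum_ext_m alpha m d : (0 < m)%nat ->
  sum_f_R0 (Dterm alpha m) (m + d) = sum_f_R0 (Dterm alpha m) m.
Proof.
  intros Hm. induction d as [|d IH].
  - rewrite Nat.add_0_r. reflexivity.
  - rewrite Nat.add_succ_r. simpl. rewrite IH.
    unfold Dterm at 2. change (Nat.eqb (S (m + d)) 0) with false. cbv iota.
    rewrite (Nat.mod_small m (S (m + d))) by lia.
    rewrite (proj2 (Nat.eqb_neq m 0)) by lia. ring.
Qed.

Lemma sum_zero (f : nat -> R) N : (forall k, f k = 0) -> sum_f_R0 f N = 0.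
Proof. intros H; induction N; simpl; rewrite ?IHN, H; ring. Qed.

Lemma sum_ext (f g : nat -> R) N : (forall k, f k = g k) -> sum_f_R0 f N = sum_f_R0 g N.
Proof. intros H; induction N; simpl; rewrite ?IHN, H; ring. Qed.

Lemma divides_iff m k : (0 < k)%nat ->
  ((exists j : Z, INR m = IZR j * INR k) <-> Nat.modulo m k = 0%nat).
Proof.
  intros Hk. rewrite Nat.Lcm0.mod_divide. split.
  - intros [j Hj]. rewrite !INR_IZR_INZ, <- mult_IZR in Hj. apply eq_IZR in Hj.
    exists (Z.to_nat j). lia.
  - intros [z Hz]. exists (Z.of_nat z). rewrite Hz, mult_INR, INR_IZR_INZ. reflexivity.
Qed.

Lemma INR_Int m : Z.to_nat (Int_part (INR m)) = m.
Proof. rewrite Int_part_INR. apply Nat2Z.id. Qed.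

Lemma sum_L alpha M x : 0 <= x <= M ->
  sum_f_R0 (Lterm alpha x) (Z.to_nat (Int_part M)) = sigma_real alpha x.
Proof.
  intros Hx. unfold sigma_real.
  set (m := Z.to_nat (Int_part x)).
  destruct (Req_EM_T x (INR m)) as [E|E].
  - destruct (Nat.ltb 0 m) eqn:Hm.
    + apply Nat.ltb_lt in Hm.
      assert (HmN : (m <= Z.to_nat (Int_part M))%nat).
      { destruct (base_Int_part M) as [B1 B2].
        assert (INR m < IZR (Int_part M) + 1) by lra.
        rewrite INR_IZR_INZ, <- plus_IZR in H. apply lt_IZR in H. lia. }
      rewrite (sum_ext _ (Dterm alpha m)).
      * replace (Z.to_nat (Int_part M)) with (m + (Z.to_nat (Int_part M) - m))%nat by lia.
        rewrite sum_ext_m by exact Hm. unfold sigma_nat. apply sum_filter.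
      * intro k. unfold Lterm, Dterm. destruct (Nat.eqb k 0) eqn:Hk; [reflexivity|].
        apply Nat.eqb_neq in Hk.
        destruct (Req_EM_T x 0) as [E0|E0].
        { exfalso. rewrite E0 in E. apply (lt_INR 0 m) in Hm. simpl in Hm. lra. }
        pose proof (cs_one_iff x k ltac:(lia)) as C.
        pose proof (divides_iff m k ltac:(lia)) as D. rewrite <- E in D.
        destruct (Req_EM_T (cs x k) 1) as [E1|E1];
        destruct (Nat.eqb (m mod k) 0) eqn:Hmk; try reflexivity.
        -- apply Nat.eqb_neq in Hmk. tauto.
        -- apply Nat.eqb_eq in Hmk. tauto.
    + apply sum_zero. intro k. unfold Lterm.
      destruct (Nat.eqb k 0); [reflexivity|].
      destruct (Req_EM_T x 0); [reflexivity|].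
      exfalso. apply Nat.ltb_ge in Hm. assert (m = 0%nat) by lia.
      rewrite H in E. simpl in E. auto.
  - apply sum_zero. intro k. unfold Lterm.
    destruct (Nat.eqb k 0) eqn:Hk; [reflexivity|].
    destruct (Req_EM_T x 0); [reflexivity|].
    destruct (Req_EM_T (cs x k) 1) as [E1|E1]; [|reflexivity].
    exfalso. apply Nat.eqb_neq in Hk.
    apply (cs_one_iff x k ltac:(lia)) in E1. destruct E1 as [j Hj].
    rewrite INR_IZR_INZ, <- mult_IZR in Hj.
    assert (Hp : (0 <= j * Z.of_nat k)%Z).
    { apply le_IZR. lra. }
    assert (Hx2 : x = INR (Z.to_nat (j * Z.of_nat k))).
    { rewrite INR_IZR_INZ, Z2Nat.id by exact Hp. exact Hj. }
    apply E. unfold m. rewrite Hx2 at 2. rewrite INR_Int. exact Hx2.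
Qed.

Theorem proposition2p1 (alpha M x : R) :
  0 < alpha -> 1 < M -> 0 <= x <= M ->
  (forall n : nat, C_seq alpha M x (S n) <= C_seq alpha M x n) /\
  Un_cv (fun n => C_seq alpha M x n) (sigma_real alpha x).
Proof.
  intros Ha HM Hx. split.
  - intro n. unfold C_seq. apply sum_Rle. intros k _.
    rewrite !f_term_eq. destruct (Nat.eqb k 0); [lra|].
    destruct (Req_EM_T x 0); [lra|].
    pose proof (cs_bounds x k). assert (0 < Rpower (INR k) alpha) by apply exp_pos.
    assert (0 <= cs x k ^ n) by (apply pow_le; lra).
    change (cs x k ^ S n) with (cs x k * cs x k ^ n).
    assert (0 <= Rpower (INR k) alpha * cs x k ^ n) by (apply Rmult_le_pos; lra). nra.
  - rewrite <- (sum_L alpha M x Hx). unfold C_seq.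
    apply cv_finsum. intro k. apply term_cv.
Qed.
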